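(* Let $S$ be a numerical semigroup of multiplicity $m$ and let $(F_\bullet,\partial_\bullet)$ be its Apéry complex. Then: (1) The maps $\partial_d$ are compatible with the substitution convention: for $d\ge2$ and every $B\subseteq[m-1]$ with $|B|=d+1$, writing for $i\in B$ $$D(i,B\setminus i)=\sum_{j\in B\setminus i}\operatorname{sign}(j,B\setminus i)\big(x_j\,e_{i,B\setminus\{i,j\}}-y^{b_{i,j}}e_{i+j,B\setminus\{i,j\}}\big)\in F_{d-1},$$ one has $\sum_{i\in B}\operatorname{sign}(i,B)\,D(i,B\setminus i)=0$; in particular, for $i<\min(A)$, the formula defining $\partial_d(e_{i,A})$ applied formally to the pair $(i,A)$ agrees with $\partial_d$ applied to the linear combination $e_{i,A}=\sum_{j\in A}\operatorname{sign}(j,A)e_{j,(A\cup\{i\})\setminus\{j\}}$. (2) For $d>1$, every nonzero entry of the matrix of $\partial_d$ with respect to the bases $\{e_{i,A}\}$ (with $i\ge\min A$) is of the form $\pm x_k$ for some $k\in[m-1]$ or $\pm y^{b_{k,l}}$ for some $k,l\in[m-1]$; in particular it is $\pm$ a monomial. (3) $\partial_{d-1}\circ\partial_d=0$ for all $d\ge2$, so $F_\bullet$ is a complex.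
   Context: Setup. A numerical semigroup is a submonoid $S\subseteq(\mathbb Z_{\ge0},+)$ containing $0$ with finite complement; its multiplicity is $m=\min(S\setminus\{0\})\ge 2$; its Apéry set is $\{n\in S:n-m\notin S\}=\{0,a_1,\dots,a_{m-1}\}$ with $a_i\equiv i\pmod m$, and $a_0:=m$. Subscripts are read mod $m$ with representatives in $\{0,\dots,m-1\}$. $R=\Bbbk[x_0,\dots,x_{m-1}]$, graded by $\deg x_i=a_i$, with $y=x_0$. For $1\le i,j\le m-1$: $c_{i,j}=\frac1m(a_i+a_j-a_{i+j})$, and $b_{i,j}=c_{i,j}$ if $i+j\not\equiv0$, $b_{i,j}=c_{i,j}+1$ if $i+j\equiv0 \pmod m$. $[m-1]=\{1,\dots,m-1\}$. Apéry complex. $F_0=R$ with basis $e_\varnothing$. For $1\le d\le m-1$, $F_d$ is the free $R$-module with basis $\{e_{i,A}: i\in[m-1],\ A\subseteq[m-1],\ |A|=d,\ i\ge\min(A)\}$, $\deg e_{i,A}=a_i+\sum_{j\in A}a_j$; its rank is $d\binom{m}{d+1}$. For $A=\{\ell_0<\dots<\ell_r\}$ and $j=\ell_t\in A$, $\operatorname{sign}(j,A)=(-1)^t$. Conventions: $e_{0,A}=0$; for $i\in[m-1]$ with $i<\min(A)$, $e_{i,A}:=\sum_{j\in A}\operatorname{sign}(j,A)\,e_{j,(A\cup\{i\})\setminus\{j\}}$; write $e_{i,j}$ for $e_{i,\{j\}}$ (so $e_{i,j}=e_{j,i}$). Differentials: $\partial_1(e_{i,j})=x_ix_j-y^{c_{i,j}}x_{i+j}$,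 and for $d\ge2$, $\partial_d(e_{i,A})=\sum_{j\in A}\operatorname{sign}(j,A)\big(x_je_{i,A\setminus j}-y^{b_{i,j}}e_{i+j,A\setminus j}\big)$, using the conventions above for terms $e_{k,B}$ with $k=0$ or $k<\min B$. *)

(* Defs.v *)
From HB Require Import structures.
From mathcomp Require Import all_boot all_order all_algebra.
From mathcomp Require Import mpoly.
Import GRing.Theory.
Local Open Scope ring_scope.

Definition is_numerical_semigroup (S : nat -> bool) : Prop :=
  [/\ S 0%N,
      (forall x y, S x -> S y -> S (x + y)%N)
    & exists N, forall n, (N <= n)%N -> S n].

Definition is_multiplicity (S : nat -> bool) (m : nat) : Prop :=
  [/\ S m, (0 < m)%N & forall n, S n -> (0 < n)%N -> (m <= n)%N].

(** a i (for 1 <= i <= m-1) is the element of the Apery set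
    Ap(S,m) = {n in S : n - m notin S} with a i = i (mod m). *)
Definition is_apery (S : nat -> bool) (m : nat) (a : nat -> nat) : Prop :=
  forall i, (0 < i < m)%N ->
    [/\ S (a i), (a i %% m = i)%N & ~ ((m <= a i)%N /\ S (a i - m)%N)].

Section AperyComplex.
Variable F : fieldType.
Variable m : nat.
Variable a : nat -> nat.

Definition apA (i : nat) : nat := if (i %% m == 0)%N then m else a (i %% m).

Definition cc (i j : nat) : nat := ((apA i + apA j - apA (i + j)) %/ m)%N.
Definition bb (i j : nat) : nat :=
  (cc i j + (if ((i + j) %% m == 0)%N then 1 else 0))%N.

(** The polynomial ring R = F[x_0,...,x_{m-1}] (grading irrelevant here). *)
Definition R := {mpoly F[m]}.

Definition xv (k : nat) : R :=
  if @insub _ (fun n => (n < m)%N) 'I_m (k %% m)%N is Some i then 'X_i else 0.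
Definition yv : R := xv 0.

(** A common ambient free R-module with basis indexed by pairs (i, A),
    i in 'I_m, A a subset of 'I_m; F_d is the span of the e_(i,A)
    with 1 <= i, 0 notin A, |A| = d and i >= min A. *)
Definition idx := ('I_m * {set 'I_m})%type.
Definition vec := {ffun idx -> R}.

Definition ebasis (p : idx) : vec := [ffun q => (q == p)%:R].
Definition vscale (c : R) (v : vec) : vec := [ffun q => c * v q].

Definition sgn (j : 'I_m) (A : {set 'I_m}) : R :=
  (-1) ^+ #|[set l in A | (val l < val j)%N]|.

Definition below (i : nat) (A : {set 'I_m}) : bool :=
  [forall j in A, (i < val j)%N].

Definition valid (d : nat) (p : idx) : bool :=
  [&& (0 < val p.1)%N, #|p.2| == d, [forall j in p.2, (0 < val j)%N]
    & ~~ below (val p.1) p.2].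

Definition inF (d : nat) (v : vec) : Prop := forall p, v p != 0 -> valid d p.

Definition eb (i : nat) (A : {set 'I_m}) : vec :=
  if @insub _ (fun n => (n < m)%N) 'I_m (i %% m)%N is Some io then
    if (i %% m == 0)%N then 0
    else if below (i %% m)%N A then
      \sum_(j in A) vscale (sgn j A) (ebasis (j, (io |: A) :\ j))
    else ebasis (io, A)
  else 0.

(** The formula defining partial_d(e_(i,A)), applied formally to (i, A). *)
Definition dform (i : 'I_m) (A : {set 'I_m}) : vec :=
  \sum_(j in A) vscale (sgn j A)
     (vscale (xv j) (eb i (A :\ j)) - vscale (yv ^+ bb i j) (eb (i + j) (A :\ j))).

Definition dd (d : nat) (v : vec) : vec :=
  \sum_(p | valid d p) vscale (v p) (dform p.1 p.2).

Definition d1 (v : vec) : R :=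
  \sum_(p | valid 1 p) v p *
    \sum_(j in p.2) (xv p.1 * xv j - yv ^+ cc p.1 j * xv (p.1 + j)).

End AperyComplex.

(* Main.v *)
Require Import Defs.
From HB Require Import structures.
From mathcomp Require Import all_boot all_order all_algebra.
From mathcomp Require Import mpoly.
From mathcomp Require Import ring zify.
Import GRing.Theory.
Local Open Scope ring_scope.

Section Arith.
Variable S : nat -> bool.
Variable m : nat.
Variable a : nat -> nat.
Hypothesis hS : is_numerical_semigroup S.
Hypothesis hm : is_multiplicity S m.
Hypothesis hm2 : (1 < m)%N.
Hypothesis ha : is_apery S m a.

Local Notation apA := (apA m a).
Local Notation cc := (cc m a).
Local Notation bb := (bb m a).

Lemma m_pos : (0 < m)%N. Proof. by apply: ltnW. Qed.

Lemma Sadd x y : S x -> S y -> S (x + y)%N.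
Proof. by case: hS => _ h _; apply: h. Qed.

Lemma Sm : S m. Proof. by case: hm. Qed.

Lemma Sclos t n : S n -> S (n + t * m)%N.
Proof.
elim: t => [|t IH] Sn; first by rewrite mul0n addn0.
by rewrite mulSn addnA [(n + m)%N]addnC -addnA Sadd ?Sm // IH.
Qed.

Lemma apery_min r n : (0 < r < m)%N -> S n -> (n %% m = r)%N -> (a r <= n)%N.
Proof.
move=> hr Sn nm; case: (ha _ hr) => Sa am anot.
rewrite leqNgt; apply/negP => lt.
have hd : (m %| a r - n)%N.
  by rewrite -eqn_mod_dvd ?(ltnW lt) // am nm.
set t := ((a r - n) %/ m)%N.
have ht : (a r - n = t * m)%N by rewrite divnK.
have tpos : (0 < t)%N.
  rewrite lt0n; apply/eqP => t0; move: ht; rewrite t0 mul0n => h; lia.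
apply: anot; split.
  have : (m <= t * m)%N by rewrite leq_pmull.
  move: ht; set X := (t * m)%N; lia.
have -> : (a r - m = n + t.-1 * m)%N.
  have e : (t * m = t.-1 * m + m)%N by rewrite -mulSnr prednK.
  move: ht e; set X := (t * m)%N; set Y := (t.-1 * m)%N; lia.
exact: Sclos.
Qed.

Lemma apA_mod x : apA x = apA (x %% m).
Proof. by rewrite /Defs.apA modn_mod. Qed.

Lemma apA_eq {x y} : (x %% m = y %% m)%N -> apA x = apA y.
Proof. by move=> e; rewrite apA_mod e -apA_mod. Qed.

Lemma apA_nz {x} : (x %% m != 0)%N -> apA x = a (x %% m).
Proof. by rewrite /Defs.apA => /negbTE ->. Qed.

Lemma apA_z {x} : (x %% m = 0)%N -> apA x = m.
Proof. by rewrite /Defs.apA => ->. Qed.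

Lemma apA_props {x} : (x %% m != 0)%N ->
  [/\ S (apA x), (apA x %% m = x %% m)%N & (0 < apA x)%N].
Proof.
move=> nz; rewrite apA_nz //.
have hr : (0 < x %% m < m)%N by rewrite lt0n nz ltn_pmod // m_pos.
case: (ha _ hr) => Sa am _; split => //.
by rewrite lt0n; apply/eqP => a0; move: am; rewrite a0 mod0n => /esym; apply/eqP.
Qed.

Lemma F2 {p q} : (p %% m != 0)%N -> (q %% m != 0)%N ->
  (cc p q * m + apA (p + q) = apA p + apA q)%N.
Proof.
move=> np nq.
case: (apA_props np) => Su um up.
case: (apA_props nq) => Sv vm vp.
have uvm : ((apA p + apA q) %% m = (p + q) %% m)%N.
  by rewrite -modnDm um vm modnDm.
rewrite /Defs.cc.
case: (eqVneq ((p + q) %% m) 0)%N => z.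
  rewrite (apA_z z).
  have hd : (m %| apA p + apA q)%N by rewrite /dvdn uvm z.
  have hle : (m <= apA p + apA q)%N by apply: dvdn_leq => //; rewrite addn_gt0 up.
  have hd2 : (m %| apA p + apA q - m)%N by rewrite dvdn_sub.
  by rewrite divnK // subnK.
have [Sw wm wp] := apA_props z.
have hle : (apA (p + q) <= apA p + apA q)%N.
  rewrite apA_nz //; apply: apery_min; first by rewrite lt0n z ltn_pmod // m_pos.
    exact: Sadd.
  by [].
have hd : (m %| apA p + apA q - apA (p + q))%N.
  by rewrite -eqn_mod_dvd // uvm wm.
by rewrite divnK // subnK.
Qed.

Lemma cc0 {p q} : (p %% m = 0)%N -> (q %% m != 0)%N -> cc p q = 1%N.
Proof.
move=> z nq; rewrite /Defs.cc apA_z //.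
have -> : apA (p + q) = apA q by apply: apA_eq; rewrite -modnDml z.
by rewrite addnK divnn m_pos.
Qed.

Lemma ccC p q : cc p q = cc q p.
Proof. by rewrite /Defs.cc addnC [(q + p)%N]addnC. Qed.

Lemma bbC p q : bb p q = bb q p.
Proof. by rewrite /Defs.bb ccC (addnC p q). Qed.

Lemma cc_modl {x x'} y : (x %% m = x' %% m)%N -> cc x y = cc x' y.
Proof.
move=> e; rewrite /Defs.cc (apA_eq e) (@apA_eq (x + y) (x' + y)) //.
by rewrite -modnDml e modnDml.
Qed.

Lemma bb_modl {x x'} y : (x %% m = x' %% m)%N -> bb x y = bb x' y.
Proof.
move=> e; rewrite /Defs.bb (cc_modl _ e).
by rewrite -modnDml e modnDml.
Qed.

Lemma bb_nz {p q} : ((p + q) %% m != 0)%N -> bb p q = cc p q.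
Proof. by rewrite /Defs.bb => /negbTE ->; rewrite addn0. Qed.

Lemma bb_z {p q} : ((p + q) %% m = 0)%N -> bb p q = (cc p q).+1.
Proof. by rewrite /Defs.bb => ->; rewrite addn1. Qed.

Lemma modD3 {i j} k : ((i + j) %% m = 0)%N -> ((i + j + k) %% m = k %% m)%N.
Proof. by move=> z; rewrite -modnDml z. Qed.

Definition Ex i j k := (bb i j + bb (i + j) k - (if ((i + j) %% m == 0)%N then 1 else 0))%N.

Lemma Ex_val {i j k} : (i %% m != 0)%N -> (j %% m != 0)%N -> (k %% m != 0)%N ->
  ((i + j + k) %% m != 0)%N ->
  (Ex i j k * m + apA (i + j + k) = apA i + apA j + apA k)%N.
Proof.
move=> ni nj nk nijk; rewrite /Ex.
case: (eqVneq ((i + j) %% m) 0)%N => z.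
  rewrite (bb_z z) (bb_nz nijk) (cc0 z nk).
  have := F2 ni nj; rewrite (apA_z z) (@apA_eq (i + j + k) k) ?modD3 //.
  rewrite addn1 subn1 /=.
  set X := (cc i j * m)%N; rewrite mulSnr -/X; lia.
rewrite (bb_nz z) (bb_nz nijk) subn0.
have := F2 ni nj; have := F2 z nk.
set X := (cc i j * m)%N; set Y := (cc (i + j) k * m)%N.
rewrite mulnDl -/X -/Y; lia.
Qed.

Lemma Ex_sym {i j k} : (i %% m != 0)%N -> (j %% m != 0)%N -> (k %% m != 0)%N ->
  ((i + j + k) %% m != 0)%N -> Ex i j k = Ex i k j.
Proof.
move=> ni nj nk nijk.
have nikj : ((i + k + j) %% m != 0)%N by rewrite addnAC.
have e1 := Ex_val ni nj nk nijk; have e2 := Ex_val ni nk nj nikj.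
rewrite addnAC in e2.
apply/eqP; rewrite -(eqn_pmul2r m_pos); apply/eqP.
set X := (Ex i j k * m)%N in e1 *; set Y := (Ex i k j * m)%N in e2 *.
lia.
Qed.

Lemma cc_sym2 {i j k} : (i %% m != 0)%N -> (j %% m != 0)%N -> (k %% m != 0)%N ->
  ((i + j) %% m != 0)%N -> ((i + k) %% m != 0)%N ->
  (cc i j + cc (i + j) k = cc i k + cc (i + k) j)%N.
Proof.
move=> ni nj nk nij nik.
have := F2 ni nj; have := F2 nij nk; have := F2 ni nk; have := F2 nik nj.
rewrite (addnAC i k j).
set X1 := (cc i j * m)%N; set X2 := (cc (i + j) k * m)%N.
set X3 := (cc i k * m)%N; set X4 := (cc (i + k) j * m)%N => h1 h2 h3 h4.
apply/eqP; rewrite -(eqn_pmul2r m_pos) !mulnDl -/X1 -/X2 -/X3 -/X4; apply/eqP.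
lia.
Qed.

Lemma cc_sym2z {i j k} : (i %% m != 0)%N -> (j %% m != 0)%N -> (k %% m != 0)%N ->
  ((i + j) %% m = 0)%N -> ((i + k) %% m != 0)%N ->
  (cc i k + cc (i + k) j = (cc i j).+1)%N.
Proof.
move=> ni nj nk zij nik.
have := F2 ni nj; have := F2 ni nk; have := F2 nik nj.
rewrite (apA_z zij) (@apA_eq (i + k + j) k); last by rewrite addnAC modD3.
set X1 := (cc i j * m)%N.
set X3 := (cc i k * m)%N; set X4 := (cc (i + k) j * m)%N => h4 h3 h1.
apply/eqP; rewrite -(eqn_pmul2r m_pos) !mulnDl mulSn -/X3 -/X4 -/X1; apply/eqP.
lia.
Qed.

End Arith.

Section Vec.
Variable F : fieldType.
Variable m : nat.
Variable a : nat -> nat.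
Hypothesis hm2 : (1 < m)%N.
Variable S : nat -> bool.
Hypothesis hS : is_numerical_semigroup S.
Hypothesis hm : is_multiplicity S m.
Hypothesis ha : is_apery S m a.

Local Notation R := (R F m).
Local Notation vec := (vec F m).
Local Notation vscale := (vscale F m).
Local Notation ebasis := (ebasis F m).
Local Notation sgn := (sgn F m).
Local Notation below := (below m).
Local Notation eb := (eb F m).
Local Notation xv := (xv F m).
Local Notation yv := (yv F m).
Local Notation bb := (bb m a).
Local Notation cc := (cc m a).

Lemma vscaleE c v q : vscale c v q = c * v q. Proof. by rewrite ffunE. Qed.
Lemma vscaleDr c v w : vscale c (v + w) = vscale c v + vscale c w.
Proof. by apply/ffunP => q; rewrite !ffunE mulrDr. Qed.
Lemma vscaleBr c v w : vscale c (v - w) = vscale c v - vscale c w.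
Proof. by apply/ffunP => q; rewrite !ffunE mulrBr. Qed.
Lemma vscaleDl c c' v : vscale (c + c') v = vscale c v + vscale c' v.
Proof. by apply/ffunP => q; rewrite !ffunE mulrDl. Qed.
Lemma vscaleNl c v : vscale (- c) v = - vscale c v.
Proof. by apply/ffunP => q; rewrite !ffunE mulNr. Qed.
Lemma vscaleNr c v : vscale c (- v) = - vscale c v.
Proof. by apply/ffunP => q; rewrite !ffunE mulrN. Qed.
Lemma vscaleA c c' v : vscale c (vscale c' v) = vscale (c * c') v.
Proof. by apply/ffunP => q; rewrite !ffunE mulrA. Qed.
Lemma vscale0l v : vscale 0 v = 0.
Proof. by apply/ffunP => q; rewrite !ffunE mul0r. Qed.
Lemma vscale0r c : vscale c 0 = 0.
Proof. by apply/ffunP => q; rewrite !ffunE mulr0. Qed.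
Lemma vscale1 v : vscale 1 v = v.
Proof. by apply/ffunP => q; rewrite !ffunE mul1r. Qed.
Lemma vscale_sumr c I r (P : pred I) (G : I -> vec) :
  vscale c (\sum_(i <- r | P i) G i) = \sum_(i <- r | P i) vscale c (G i).
Proof.
apply/ffunP => q; rewrite ffunE !sum_ffunE mulr_sumr.
by apply: eq_bigr => i _; rewrite ffunE.
Qed.

Lemma sgn_pm (j : 'I_m) (A : {set 'I_m}) : sgn j A = 1 \/ sgn j A = -1.
Proof.
rewrite /Defs.sgn; elim: #|_| => [|n IH]; first by left; rewrite expr0.
rewrite exprS; case: IH => ->; [right; exact: mulr1 | left; by rewrite mulrNN mulr1].
Qed.

Lemma cnt_del (j k : 'I_m) (A : {set 'I_m}) : j \in A -> #|[set l in A | (val l < val k)%N]| =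
  ((val j < val k)%N + #|[set l in A :\ j | (val l < val k)%N]|)%N.
Proof.
move=> jA; rewrite (cardsD1 j) inE jA /=; congr (_ + _)%N.
by apply: eq_card => l; rewrite !inE andbA.
Qed.

Lemma sgn_del (j k : 'I_m) (A : {set 'I_m}) : j \in A -> sgn k A = (-1) ^+ (val j < val k)%N * sgn k (A :\ j).
Proof. by move=> jA; rewrite /Defs.sgn (@cnt_del j k A jA) exprD. Qed.

Lemma sgn_anti {j k : 'I_m} {A : {set 'I_m}} : j \in A -> k \in A -> j != k ->
  sgn j A * sgn k (A :\ j) = - (sgn k A * sgn j (A :\ k)).
Proof.
move=> jA kA jk; rewrite (@sgn_del j k A jA) (@sgn_del k j A kA).
have [lt|lt|eq] := ltngtP (val j) (val k).
- rewrite /= expr1 expr0; ring.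
- rewrite /= expr1 expr0; ring.
- by move: jk; rewrite -val_eqE eq /= eqxx.
Qed.

Lemma sgn_min (j : 'I_m) (A : {set 'I_m}) : (forall l, l \in A -> (val j <= val l)%N) -> sgn j A = 1.
Proof.
move=> H; rewrite /Defs.sgn.
have -> : [set l in A | (val l < val j)%N] = set0.
  apply/setP => l; rewrite !inE; apply/negbTE; apply/negP => /andP[lA].
  by rewrite ltnNge H.
by rewrite cards0 expr0.
Qed.

Lemma setD1C (B : {set 'I_m}) i j : B :\ i :\ j = B :\ j :\ i.
Proof. by apply/setP => x; rewrite !inE andbCA. Qed.

Definition okset (A : {set 'I_m}) : bool := [forall j in A, (0 < val j)%N].

Lemma oksetP {A : {set 'I_m}} : okset A -> forall j, j \in A -> (0 < val j)%N.
Proof. by move/forall_inP. Qed.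

Lemma okset_del (A : {set 'I_m}) (j : 'I_m) : okset A -> okset (A :\ j).
Proof. by move=> /forall_inP H; apply/forall_inP => l; rewrite inE => /andP[_ /H]. Qed.

Lemma mpos : (0 < m)%N. Proof. exact: ltnW. Qed.

Definition om (n : nat) : 'I_m := Ordinal (ltn_pmod n mpos).

Lemma ebE (i : 'I_m) (A : {set 'I_m}) : (0 < val i)%N ->
  eb i A = if below i A then \sum_(j in A) vscale (sgn j A) (ebasis (j, (i |: A) :\ j))
           else ebasis (i, A).
Proof.
move=> ip; rewrite /Defs.eb modn_small ?ltn_ord //.
case: insubP => [io _ vio|]; last by rewrite ltn_ord.
have -> : io = i by apply: val_inj.
have -> : (val i == 0%N) = false by apply/negbTE; rewrite -lt0n.
by [].
Qed.

Lemma eb_mod n (A : {set 'I_m}) : eb n A = eb (n %% m) A.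
Proof. by rewrite /Defs.eb modn_mod. Qed.

Lemma eb_z n (A : {set 'I_m}) : (n %% m = 0)%N -> eb n A = 0.
Proof. by move=> z; rewrite /Defs.eb; case: insubP => // io _ _; rewrite z eqxx. Qed.

Lemma eb_om n (A : {set 'I_m}) : eb n A = eb (om n) A.
Proof. by rewrite eb_mod. Qed.

Lemma xv_mod n : xv n = xv (n %% m).
Proof. by rewrite /Defs.xv modn_mod. Qed.

Lemma below_min (i j : 'I_m) (A : {set 'I_m}) : j \in A -> (val j <= val i)%N -> below i A = false.
Proof.
move=> jA ji; apply/negbTE/negP => /forall_inP /(_ j jA).
by rewrite ltnNge ji.
Qed.

Lemma Pk (A : {set 'I_m}) : okset A -> \sum_(j in A) vscale (sgn j A) (eb j (A :\ j)) = 0.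
Proof.
move=> ok.
case: (set_0Vmem A) => [->|[j1 j1A]]; first by rewrite big_set0.
case: (@arg_minnP _ j1 (fun j => j \in A) (fun j : 'I_m => val j) j1A) => j0 j0A j0min.
rewrite (bigD1 j0) //=.
have j0pos := oksetP ok _ j0A.
rewrite ebE //.
have -> : below j0 (A :\ j0) = true.
  apply/forall_inP => l; rewrite !inE => /andP[lj0 lA].
  rewrite ltn_neqAle (j0min l lA) andbT.
  by apply: contra lj0 => /eqP e; apply/eqP; apply: ord_inj; rewrite -e.
rewrite setD1K // (@sgn_min j0 A) ?vscale1; last by move=> l lA; apply: j0min.
rewrite (eq_bigr (fun l => - vscale (sgn l A) (ebasis (l, A :\ l)))); last first.
  move=> l; rewrite !inE => /andP[lj0 lA].
  rewrite (@sgn_del j0 l A j0A).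
  have -> : (val j0 < val l)%N by rewrite ltn_neqAle (j0min l lA) andbT val_eqE eq_sym.
  by rewrite expr1 mulN1r vscaleNl opprK.
rewrite sumrN.
rewrite [X in _ + X](eq_bigr (fun l => vscale (sgn l A) (ebasis (l, A :\ l)))); last first.
  move=> j; case/andP => jA jj0; congr vscale.
  rewrite ebE ?(oksetP ok _ jA) // (@below_min j j0) //.
    by rewrite !inE eq_sym jj0.
  exact: j0min.
rewrite addrC (eq_bigl (fun l => l \in A :\ j0)) ?subrr // => l.
by rewrite !inE andbC.
Qed.

Lemma exch (V : nmodType) (B : {set 'I_m}) (H : 'I_m -> 'I_m -> V) :
  \sum_(i in B) \sum_(j in B :\ i) H i j = \sum_(j in B) \sum_(i in B :\ j) H i j.
Proof.
rewrite (exchange_big_dep (fun j => j \in B)) /=; last by move=> i j _; rewrite !inE => /andP[].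
apply: eq_bigr => j jB; apply: eq_bigl => i; rewrite !inE.
by rewrite jB andbT eq_sym andbC.
Qed.

Lemma ord_neq (i j : 'I_m) : (i != j) = (val i != val j).
Proof. by []. Qed.

Lemma antisym0 (V : zmodType) (B : {set 'I_m}) (G : 'I_m -> 'I_m -> V) :
  (forall i j, i \in B -> j \in B -> i != j -> G j i = - G i j) ->
  \sum_(i in B) \sum_(j in B :\ i) G i j = 0.
Proof.
move=> HG.
rewrite (eq_bigr (fun i => \sum_(j in B :\ i | (val j < val i)%N) G i j +
                          \sum_(j in B :\ i | ~~ (val j < val i)%N) G i j)); last first.
  by move=> i _; rewrite (bigID (fun j => (val j < val i)%N)).
rewrite big_split /=.
rewrite [X in _ + X](exchange_big_dep (fun j => j \in B)) /=; last first.
  by move=> i j _ /andP[]; rewrite !inE => /andP[].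
set S1 := (X in X + _).
suff -> : \sum_(j in B) \sum_(i | (i \in B) && ((j \in B :\ i) && ~~ (val j < val i)%N)) G i j = - S1
  by rewrite subrr.
rewrite /S1 -sumrN; apply: eq_bigr => j jB; rewrite -sumrN; apply: eq_big => [i|i].
  rewrite !inE jB andbT -leqNgt ord_neq.
  case: (i \in B); rewrite ?andbF ?andbT //.
  rewrite /= [i != j]ord_neq ltn_neqAle. by rewrite eq_sym; case: (_ != _).
move=> /andP[iB /andP[]]; rewrite !inE => /andP[ji _] _.
by rewrite (HG j i jB iB ji).
Qed.

Definition df (i : nat) (A : {set 'I_m}) : vec :=
  \sum_(j in A) vscale (sgn j A)
     (vscale (xv j) (eb i (A :\ j)) - vscale (yv ^+ bb i j) (eb (i + j) (A :\ j))).

Lemma dformE (i : 'I_m) A : dform F m a i A = df i A.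
Proof. by []. Qed.

Lemma claim1 (B : {set 'I_m}) : okset B ->
  \sum_(i in B) vscale (sgn i B) (df i (B :\ i)) = 0.
Proof.
move=> ok.
rewrite (eq_bigr (fun i =>
   \sum_(j in B :\ i) vscale (sgn i B * sgn j (B :\ i) * xv j) (eb i (B :\ i :\ j)) -
   \sum_(j in B :\ i) vscale (sgn i B * sgn j (B :\ i) * yv ^+ bb i j) (eb (i + j) (B :\ i :\ j))));
  last first.
  move=> i _; rewrite /df vscale_sumr -sumrB; apply: eq_bigr => j _.
  by rewrite !vscaleA vscaleBr !vscaleA.
rewrite sumrB.
rewrite [X in _ - X]antisym0 ?subr0; last first.
  move=> i j iB jB ij.
  rewrite bbC (addnC j i) setD1C -vscaleNl; congr vscale.
  by rewrite (sgn_anti jB iB); [ring | rewrite eq_sym].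
rewrite exch big1 // => j jB.
rewrite (eq_bigr (fun i => vscale (- sgn j B * xv j) (vscale (sgn i (B :\ j)) (eb i (B :\ j :\ i))))); last first.
  move=> i; rewrite !inE => /andP[ij iB].
  rewrite vscaleA setD1C; congr vscale.
  rewrite (sgn_anti iB jB ij); ring.
by rewrite -vscale_sumr Pk ?vscale0r // okset_del.
Qed.

Local Notation dd := (dd F m a).
Local Notation valid := (valid m).

Lemma ddD d v w : dd d (v + w) = dd d v + dd d w.
Proof. by rewrite /Defs.dd -big_split; apply: eq_bigr => p _; rewrite ffunE vscaleDl. Qed.
Lemma dd0 d : dd d 0 = 0.
Proof. by rewrite /Defs.dd big1 // => p _; rewrite ffunE vscale0l. Qed.
Lemma ddN d v : dd d (- v) = - dd d v.
Proof. by rewrite /Defs.dd -sumrN; apply: eq_bigr => p _; rewrite ffunE vscaleNl. Qed.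
Lemma ddB d v w : dd d (v - w) = dd d v - dd d w.
Proof. by rewrite ddD ddN. Qed.
Lemma ddZ d c v : dd d (vscale c v) = vscale c (dd d v).
Proof. by rewrite /Defs.dd vscale_sumr; apply: eq_bigr => p _; rewrite ffunE vscaleA. Qed.
Lemma dd_sum d I r (P : pred I) (G : I -> vec) :
  dd d (\sum_(i <- r | P i) G i) = \sum_(i <- r | P i) dd d (G i).
Proof. exact: (big_morph _ (ddD d) (dd0 d)). Qed.
Lemma dd_ebasis d p : valid d p -> dd d (ebasis p) = dform F m a p.1 p.2.
Proof.
move=> vp; rewrite /Defs.dd (bigD1 p) //= ffunE eqxx vscale1 big1 ?addr0 //.
by move=> q /andP[_ qp]; rewrite ffunE (negbTE qp) vscale0l.
Qed.

Lemma df_mod n B : df n B = df (n %% m) B.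
Proof.
rewrite /df; apply: eq_bigr => j _.
rewrite (eb_mod n) (@eb_mod (n %% m)) modn_mod (bb_modl _ _ _ (esym (modn_mod n m))).
by rewrite (eb_mod (n + j)) (@eb_mod (n %% m + j)) modnDml.
Qed.

Lemma valid_sub d (i l : 'I_m) (B : {set 'I_m}) : (0 < val i)%N -> okset B -> #|B| = d ->
  below i B -> l \in B -> valid d (l, (i |: B) :\ l).
Proof.
move=> ip ok cB bl lB.
have iB : i \notin B.
  by apply/negP => iB; move/forall_inP: bl => /(_ i iB); rewrite ltnn.
apply/and4P; split => /=.
- exact: oksetP ok _ lB.
- have := cardsD1 l (i |: B); rewrite in_setU1 lB orbT cardsU1 iB cB.
  by move=> /eqP; rewrite eqn_add2l eq_sym.
- apply/forall_inP => t; rewrite !inE => /andP[_ /orP[/eqP->|tB]] //.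
  exact: oksetP ok _ tB.
- apply/negP => /forall_inP H.
  have : i \in (i |: B) :\ l.
    rewrite !inE eqxx orTb andbT.
    by apply: contraNneq iB => ->.
  move/H => il.
  by move/forall_inP: bl => /(_ l lB); rewrite ltnNge (ltnW il).
Qed.

Lemma ddeb d n (B : {set 'I_m}) : okset B -> #|B| = d -> dd d (eb n B) = df n B.
Proof.
move=> ok cB.
case: (eqVneq (n %% m) 0)%N => z.
  rewrite eb_z // dd0.
  rewrite /df (eq_bigr (fun j => - vscale yv (vscale (sgn j B) (eb j (B :\ j))))); last first.
    move=> j jB; have jp := oksetP ok _ jB.
    have jm : (val j %% m = val j)%N by rewrite (modn_small (ltn_ord j)).

    have jz : (val j %% m != 0)%N by rewrite jm -lt0n.
    rewrite eb_z // vscale0r sub0r.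
    have -> : bb n j = 1%N.
      by rewrite /Defs.bb (cc0 _ _ hm2 z jz) -modnDml z add0n jm (negbTE (lt0n_neq0 jp)).
    rewrite (eb_mod (n + j)) -modnDml z add0n -eb_mod expr1.
    by rewrite vscaleNr !vscaleA mulrC.
  by rewrite sumrN -vscale_sumr Pk // vscale0r oppr0.
rewrite eb_om df_mod.
have ip : (0 < val (om n))%N by rewrite /= lt0n.
change (n %% m)%N with (val (om n)).
set i := om n.
rewrite ebE //; case: ifP => bl; last first.
  rewrite dd_ebasis //; apply/and4P; split => //; first by rewrite cB.
  by rewrite bl.
have iB : i \notin B.
  by apply/negP => iB; move/forall_inP: bl => /(_ i iB); rewrite ltnn.
rewrite dd_sum (eq_bigr (fun l => vscale (sgn l B) (df l ((i |: B) :\ l)))); last first.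
  by move=> l lB; rewrite ddZ dd_ebasis //; apply: valid_sub.
have okB' : okset (i |: B).
  apply/forall_inP => t; rewrite !inE => /orP[/eqP->|tB] //.
  exact: oksetP ok _ tB.
have := @claim1 _ okB'.
rewrite (bigD1 i) ?setU11 //= (@sgn_min i) ?vscale1; last first.
  move=> l; rewrite !inE => /orP[/eqP->|lB] //.
  by move/forall_inP: bl => /(_ l lB) /ltnW.
rewrite setU1K //.
rewrite (eq_bigl (fun l => l \in B)); last first.
  move=> l; rewrite !inE; case: (eqVneq l i) => [->|_] /=; [by rewrite (negbTE iB) | by rewrite andbT].
rewrite (eq_bigr (fun l => - vscale (sgn l B) (df l ((i |: B) :\ l)))); last first.
  move=> l lB; rewrite (@sgn_del i l (i |: B)) ?setU11 // setU1K //.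
  have -> : (val i < val l)%N by move/forall_inP: bl => /(_ l lB).
  by rewrite expr1 mulN1r vscaleNl.
by rewrite sumrN => /eqP; rewrite subr_eq0 => /eqP.
Qed.

Lemma nzI {j : 'I_m} : (0 < val j)%N -> (val j %% m != 0)%N.
Proof. by move=> jp; rewrite (modn_small (ltn_ord j)) -lt0n. Qed.
Lemma nzI' {j : 'I_m} : (0 < val j)%N -> (nat_of_ord j %% m != 0)%N.
Proof. by move=> jp; rewrite (modn_small (ltn_ord j)) -lt0n. Qed.

Lemma PkC (A : {set 'I_m}) (j : 'I_m) (c0 : R) (h : 'I_m -> vec) : okset A ->
  (forall k, k \in A :\ j -> h k = vscale c0 (vscale (sgn k (A :\ j)) (eb k (A :\ j :\ k)))) ->
  \sum_(k in A :\ j) h k = 0.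
Proof.
move=> ok H; rewrite (eq_bigr _ H) -vscale_sumr Pk ?vscale0r //.
exact: okset_del.
Qed.

Lemma T4lemma (i : 'I_m) (A : {set 'I_m}) : (0 < val i)%N -> okset A ->
  \sum_(j in A) \sum_(k in A :\ j)
    vscale (sgn j A * sgn k (A :\ j) * (yv ^+ bb i j * yv ^+ bb (i + j) k))
           (eb (i + j + k) (A :\ j :\ k)) = 0.
Proof.
move=> ip ok.
pose f (j k : 'I_m) := vscale (yv ^+ Ex m a i j k) (eb (i + j + k) (A :\ j :\ k)).
rewrite (eq_bigr (fun j => \sum_(k in A :\ j) vscale (sgn j A * sgn k (A :\ j)) (f j k) +
   \sum_(k in A :\ j) (vscale (sgn j A * sgn k (A :\ j) * (yv ^+ bb i j * yv ^+ bb (i + j) k))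
           (eb (i + j + k) (A :\ j :\ k)) - vscale (sgn j A * sgn k (A :\ j)) (f j k))));
  last by move=> j _; rewrite -big_split /=; apply: eq_bigr => k _; rewrite addrC subrK.
rewrite big_split /= antisym0 ?add0r; last first.
  move=> j k jA kA jk.
  have fs : f k j = f j k.
    rewrite /f (addnAC i k j) setD1C.
    case: (eqVneq ((i + j + k) %% m) 0)%N => z; first by rewrite eb_z // !vscale0r.
    rewrite (@Ex_sym S m a hS hm hm2 ha i j k (nzI ip) _ _ z) //.
      exact: (nzI' (oksetP ok _ jA)). exact: (nzI' (oksetP ok _ kA)).
  by rewrite fs (sgn_anti jA kA jk) vscaleNl opprK.
apply: big1 => j jA.
have jp := oksetP ok _ jA.
case: (eqVneq ((i + j) %% m) 0)%N => z; last first.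
  apply: big1 => k _; rewrite /f /Ex (negbTE z) subn0 vscaleA exprD subrr //.
rewrite sumrB.
rewrite (@PkC A j (sgn j A * yv ^+ (bb i j).+1)); last first.
- move=> k kA.
  have kz : (val k %% m != 0)%N by apply: nzI; apply: (oksetP ok); move: kA; rewrite inE => /andP[].
  have e1 : ((i + j + k) %% m = val k %% m)%N by apply: modD3.
  have -> : bb (i + j) k = 1%N by rewrite /Defs.bb e1 (negbTE kz) (cc0 _ _ hm2 z kz).
  rewrite (eb_mod (i + j + k)) e1 -eb_mod vscaleA; congr vscale.
  by rewrite expr1 exprS; ring.
- exact: ok.
rewrite (@PkC A j (sgn j A * yv ^+ bb i j)) ?subrr //.
move=> k kA.
have kz : (val k %% m != 0)%N by apply: nzI; apply: (oksetP ok); move: kA; rewrite inE => /andP[].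
have e1 : ((i + j + k) %% m = val k %% m)%N by apply: modD3.
rewrite /f.
have -> : Ex m a i j k = bb i j.
  by rewrite /Ex z eqxx /Defs.bb e1 (negbTE kz) (cc0 _ _ hm2 z kz) addn0 addnK.
rewrite (eb_mod (i + j + k)) e1 -eb_mod !vscaleA; congr vscale.
ring.
Qed.

Lemma DDlemma (i : 'I_m) (A : {set 'I_m}) : (0 < val i)%N -> okset A ->
  \sum_(j in A) vscale (sgn j A)
     (vscale (xv j) (df i (A :\ j)) - vscale (yv ^+ bb i j) (df (i + j) (A :\ j))) = 0.
Proof.
move=> ip ok.
pose s (j k : 'I_m) := sgn j A * sgn k (A :\ j).
pose T1 (j k : 'I_m) := vscale (s j k * (xv j * xv k)) (eb i (A :\ j :\ k)).
pose T23 (j k : 'I_m) := vscale (s j k * (xv j * yv ^+ bb i k)) (eb (i + k) (A :\ j :\ k)) +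
                         vscale (s j k * (yv ^+ bb i j * xv k)) (eb (i + j) (A :\ j :\ k)).
pose T4 (j k : 'I_m) := vscale (sgn j A * sgn k (A :\ j) * (yv ^+ bb i j * yv ^+ bb (i + j) k))
           (eb (i + j + k) (A :\ j :\ k)).
rewrite (eq_bigr (fun j => \sum_(k in A :\ j) T1 j k - \sum_(k in A :\ j) T23 j k +
                           \sum_(k in A :\ j) T4 j k)); last first.
  move=> j _; rewrite -sumrB -big_split /= /df.
  apply/ffunP => q; rewrite !(ffunE, sum_ffunE) !mulr_sumr -sumrB mulr_sumr.
  apply: eq_bigr => k _; rewrite !(ffunE, sum_ffunE) /T1 /T23 /T4 /s.
  ring.
rewrite big_split sumrB /= T4lemma // addr0.
rewrite antisym0; last first.
  move=> j k jA kA jk; rewrite /T1 /s (sgn_anti jA kA jk) setD1C -vscaleNl.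
  by congr vscale; ring.
rewrite antisym0 ?subrr //.
move=> j k jA kA jk; rewrite /T23 /s (sgn_anti jA kA jk) setD1C.
rewrite addrC opprD -!vscaleNl.
by congr (_ + _); congr vscale; ring.
Qed.

Lemma dd_dform_eq (d : nat) (p : idx m) : (3 <= d)%N -> valid d p ->
  dd d.-1 (dform F m a p.1 p.2) = 0.
Proof.
case: p => i A d3 /and4P [/= ip /eqP cA ok _].
rewrite dformE /df dd_sum -[RHS](@DDlemma i A ip ok); apply: eq_bigr => j jA.
rewrite ddZ ddB !ddZ !(@ddeb d.-1) //; try exact: okset_del.
all: by rewrite (cardsD1 j A) jA in cA; rewrite -cA.
Qed.

Lemma part3b (d : nat) (v : vec) : (3 <= d)%N -> dd d.-1 (dd d v) = 0.
Proof.
move=> d3; rewrite {2}/Defs.dd dd_sum big1 // => p vp.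
by rewrite ddZ dd_dform_eq // vscale0r.
Qed.

Local Notation d1 := (d1 F m a).

Lemma d1D v w : d1 (v + w) = d1 v + d1 w.
Proof. by rewrite /Defs.d1 -big_split; apply: eq_bigr => p _; rewrite ffunE mulrDl. Qed.
Lemma d10 : d1 0 = 0.
Proof. by rewrite /Defs.d1 big1 // => p _; rewrite ffunE mul0r. Qed.
Lemma d1N v : d1 (- v) = - d1 v.
Proof. by rewrite /Defs.d1 -sumrN; apply: eq_bigr => p _; rewrite ffunE mulNr. Qed.
Lemma d1B v w : d1 (v - w) = d1 v - d1 w.
Proof. by rewrite d1D d1N. Qed.
Lemma d1Z c v : d1 (vscale c v) = c * d1 v.
Proof. by rewrite /Defs.d1 mulr_sumr; apply: eq_bigr => p _; rewrite ffunE mulrA. Qed.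
Lemma d1_sum I r (P : pred I) (G : I -> vec) :
  d1 (\sum_(i <- r | P i) G i) = \sum_(i <- r | P i) d1 (G i).
Proof. exact: (big_morph _ d1D d10). Qed.

Definition g (n : nat) (k : 'I_m) : R := xv n * xv k - yv ^+ cc n k * xv (n + k).

Lemma d1_ebasis p : valid 1 p -> d1 (ebasis p) = \sum_(j in p.2) g p.1 j.
Proof.
move=> vp; rewrite /Defs.d1 (bigD1 p) //= ffunE eqxx mul1r [X in _ + X]big1 ?addr0 //.
by move=> q /andP[_ qp]; rewrite ffunE (negbTE qp) mul0r.
Qed.

Lemma yvE : xv 0 = yv. Proof. by []. Qed.

Lemma g_mod n k : g n k = g (n %% m) k.
Proof.
rewrite /g (xv_mod n) (@xv_mod (n %% m)) modn_mod.
rewrite (cc_modl _ _ k (esym (modn_mod n m))).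
by rewrite (xv_mod (n + k)) (@xv_mod (n %% m + k)) modnDml.
Qed.

Lemma d1eb n (C : {set 'I_m}) : okset C -> #|C| = 1%N -> d1 (eb n C) = \sum_(k in C) g n k.
Proof.
move=> ok /eqP /cards1P [k eC]; subst C.
have kp : (0 < val k)%N by exact: (oksetP ok _ (set11 k)).
have kz := nzI kp.
rewrite big_set1.
case: (eqVneq (n %% m) 0)%N => z.
  rewrite eb_z // d10 /g (xv_mod n) z yvE (cc0 _ _ hm2 z kz) expr1.
  rewrite (xv_mod (n + k)) -modnDml z add0n -xv_mod.
  by rewrite subrr.
rewrite eb_om g_mod.
have ip : (0 < val (om n))%N by rewrite /= lt0n.
change (n %% m)%N with (val (om n)).
set i := om n.
rewrite ebE //; case: ifP => bl; last first.
  rewrite d1_ebasis ?big_set1 //; apply/and4P; split => //; first by rewrite cards1.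
  by rewrite bl.
have ik : (val i < val k)%N by move/forall_inP: bl => /(_ k); rewrite in_set1 eqxx => /(_ isT).
rewrite big_set1 (@sgn_min k) ?vscale1; last by move=> l; rewrite in_set1 => /eqP->.
have -> : (i |: [set k]) :\ k = [set i].
  apply/setP => t; rewrite !inE; case: (eqVneq t k) => [->|_] /=; last by rewrite orbF.
  by apply/esym/negbTE; rewrite -val_eqE /= neq_ltn ik orbT.
rewrite d1_ebasis ?big_set1 /=.
  by rewrite /g mulrC ccC addnC.
apply/and4P; split => //=; first by rewrite cards1.
  by apply/forall_inP => t; rewrite in_set1 => /eqP->.
apply/negP => /forall_inP /(_ i); rewrite in_set1 eqxx => /(_ isT).
by rewrite ltnNge (ltnW ik).
Qed.

Definition Z (i j k : 'I_m) : R := xv j * g i k - yv ^+ bb i j * g (i + j) k.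

Lemma Zcase (i j k : 'I_m) : (0 < val i)%N -> (0 < val j)%N -> (0 < val k)%N ->
  ((i + j) %% m = 0)%N -> ((i + k) %% m != 0)%N -> Z i j k = Z i k j.
Proof.
move=> ip jp kp z nik.
have ni := nzI' ip; have nj := nzI' jp; have nk := nzI' kp.
rewrite /Z /g.
rewrite (@bb_z m a i j z) (@bb_nz m a i k) //.
rewrite (xv_mod (i + j)) z yvE (@cc0 m a hm2 (i + j) k z nk) expr1.
rewrite (xv_mod (i + j + k)) (@modD3 m i j k z) -xv_mod.
rewrite (xv_mod (i + k + j)) addnAC (@modD3 m i j k z) -xv_mod.
have E : yv ^+ cc i k * yv ^+ cc (i + k) j = yv ^+ cc i j * yv.
  by rewrite -exprD (@cc_sym2z S m a hS hm hm2 ha i j k ni nj nk z nik) exprSr.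
apply/eqP; rewrite -subr_eq0; apply/eqP.
transitivity (xv k * (yv ^+ cc i j * yv - yv ^+ cc i k * yv ^+ cc (i + k) j)); first ring.
by rewrite E subrr mulr0.
Qed.

Lemma Zsym (i j k : 'I_m) : (0 < val i)%N -> (0 < val j)%N -> (0 < val k)%N -> j != k ->
  Z i j k = Z i k j.
Proof.
move=> ip jp kp jk.
case: (eqVneq ((i + j) %% m) 0)%N => zj; case: (eqVneq ((i + k) %% m) 0)%N => zk.
- exfalso; move: jk; apply/negP; rewrite negbK -val_eqE /=.
  have : ((i + j) %% m == (i + k) %% m)%N by rewrite zj zk.
  by rewrite eqn_modDl !modn_small.
- exact: Zcase.
- by rewrite (@Zcase i k j ip kp jp zk zj).
have ni := nzI' ip; have nj := nzI' jp; have nk := nzI' kp.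
rewrite /Z /g (@bb_nz m a i j zj) (@bb_nz m a i k zk) (addnAC i k j).
have E : yv ^+ cc i j * yv ^+ cc (i + j) k = yv ^+ cc i k * yv ^+ cc (i + k) j.
  by rewrite -!exprD (@cc_sym2 S m a hS hm hm2 ha i j k ni nj nk zj zk).
apply/eqP; rewrite -subr_eq0; apply/eqP.
transitivity (xv (i + j + k) * (yv ^+ cc i j * yv ^+ cc (i + j) k - yv ^+ cc i k * yv ^+ cc (i + k) j));
  first ring.
by rewrite E subrr mulr0.
Qed.

Lemma part3a (v : vec) : d1 (dd 2 v) = 0.
Proof.
rewrite /Defs.dd d1_sum big1 // => [[i A]] /and4P [/= ip /eqP cA ok _].
rewrite d1Z dformE /df d1_sum.
rewrite (eq_bigr (fun j => \sum_(k in A :\ j) (sgn j A * sgn k (A :\ j) * Z i j k))); last first.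
  move=> j jA.
  have c1 : #|A :\ j| = 1%N by move: cA; rewrite (cardsD1 j A) jA; case.
  rewrite d1Z d1B !d1Z !d1eb ?okset_del // mulr_sumr !mulr_sumr -sumrB mulr_sumr.
  apply: eq_bigr => k kA.
  rewrite (@sgn_min k (A :\ j)); last first.
    move=> l lA; move: c1 => /eqP /cards1P [t et].
    by move: kA lA; rewrite et !in_set1 => /eqP-> /eqP->.
  by rewrite /Z mulr1 mulrBr.
rewrite antisym0 ?mulr0 //.
move=> j k jA kA jk.
rewrite (sgn_anti jA kA jk) (@Zsym i j k ip (oksetP ok _ jA) (oksetP ok _ kA) jk).
by rewrite mulNr opprK.
Qed.

Lemma modneq x y : (0 < x < m)%N -> (y < m)%N -> ((x + y) %% m != y)%N.
Proof.
move=> /andP[x0 xm] ym.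
case: (ltnP (x + y) m) => h.
  rewrite modn_small //; apply/eqP => e; move: x0; rewrite -(addnK y x) e subnn //.
have -> : (x + y = (x + y - m) + m)%N by rewrite subnK.
rewrite modnDr modn_small; last by lia.
apply/eqP => e; move: h e xm; clear; lia.
Qed.

Lemma ebq n (B : {set 'I_m}) (q : idx m) : (n %% m != 0)%N -> eb n B q != 0 ->
  (eb n B q = 1 \/ eb n B q = -1) /\
  (forall t, ((t \in q.2) + (t == q.1) = (t \in B) + (val t == n %% m))%N).
Proof.
move=> z; rewrite eb_om.
have ip : (0 < val (om n))%N by rewrite /= lt0n.
change (n %% m)%N with (val (om n)).
set i := om n.
rewrite ebE //; case: ifP => bl; last first.
  rewrite ffunE; case: (eqVneq q (i, B)) => [->|qn]; last by rewrite /= mulr0n eqxx.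
  by rewrite /= mulr1n => _; split; [left | move=> t].
have iB : i \notin B.
  by apply/negP => iB; move/forall_inP: bl => /(_ i iB); rewrite ltnn.
rewrite sum_ffunE.
case: (pickP (fun l => (l \in B) && (q == (l, (i |: B) :\ l)))) => [l /andP[lB /eqP ql]|none]; last first.
  rewrite big1 ?eqxx // => l lB; rewrite !ffunE.
  by move: (none l); rewrite lB /= => ->; rewrite mulr0.
rewrite (bigD1 l) //= big1 ?addr0; last first.
  move=> l' /andP[_ l'l]; rewrite !ffunE ql xpair_eqE eq_sym (negbTE l'l) /= mulr0 //.
rewrite !ffunE ql eqxx mulr1 => _; split; first exact: sgn_pm.
move=> t /=.
have il : i != l by apply: contraNneq iB => ->.
rewrite -[(n %% m)%N]/(val i) val_eqE.
case: (eqVneq t l) => [->|tl]; rewrite !inE ?eqxx /=.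
  by rewrite lB eq_sym (negbTE il).
case: (eqVneq t i) => [->|ti] /=.
  by rewrite il (negbTE iB).
by rewrite tl !addn0.
Qed.

Lemma part2 d (p q : idx m) : (1 < d)%N -> valid d p -> dd d (ebasis p) q != 0 ->
     (exists k : nat, (0 < k < m)%N /\
        (dd d (ebasis p) q = xv k \/ dd d (ebasis p) q = - xv k))
     \/
     (exists k l : nat, [/\ (0 < k < m)%N, (0 < l < m)%N &
        (dd d (ebasis p) q = yv ^+ bb k l
         \/ dd d (ebasis p) q = - yv ^+ bb k l)]).
Proof.
move=> d1 vp; rewrite dd_ebasis //; case: p vp => i A /= /and4P [/= ip /eqP cA ok _].
rewrite dformE /df sum_ffunE.
have im : (nat_of_ord i %% m = i)%N by rewrite modn_small.
pose e1 (j : 'I_m) := eb i (A :\ j) q.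
pose e2 (j : 'I_m) := eb (i + j) (A :\ j) q.
have cE : forall j, (vscale (sgn j A) (vscale (xv j) (eb i (A :\ j)) -
            vscale (yv ^+ bb i j) (eb (i + j) (A :\ j)))) q =
          sgn j A * (xv j * e1 j - yv ^+ bb i j * e2 j).
  by move=> j; rewrite !ffunE.
rewrite (eq_bigr _ (fun j _ => cE j)).
have ival : (0 < i < m)%N by rewrite ip ltn_ord.
have e2z : forall j : 'I_m, ((i + j) %% m = 0)%N -> e2 j = 0.
  by move=> j z; rewrite /e2 eb_z // ffunE.
case: (boolP [exists j in A, e1 j != 0]) => [/exists_inP [j0 j0A e10] | none1].
  have [v1 c1] := @ebq _ _ _ (nzI' ip) e10; rewrite im in c1.
  have o1 : forall j, j \in A -> j != j0 -> e1 j = 0.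
    move=> j jA jj0; apply/eqP; apply/negP => /negP ne.
    have [_ c] := @ebq _ _ _ (nzI' ip) ne; rewrite im in c.
    move: (c1 j0) (c j0); rewrite !inE eqxx /= j0A (eq_sym j0 j) jj0 /= => -> /eqP.
    by rewrite eqn_add2r.
  have o2 : forall j, j \in A -> e2 j = 0.
    move=> j jA; case: (eqVneq ((i + j) %% m) 0)%N => z; first exact: e2z.
    apply/eqP; apply/negP => /negP ne.
    have [_ c] := @ebq _ _ _ z ne.
    have jm : (j < m)%N := ltn_ord j.
    have nj : ((nat_of_ord i + nat_of_ord j) %% m != nat_of_ord j)%N by exact: modneq.
    have nj' : (nat_of_ord j == (i + j) %% m)%N = false by rewrite eq_sym (negbTE nj).
    move: (c1 j) (c j); rewrite !inE eqxx /= nj' addn0 => ->.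
    case: (eqVneq j j0) => [ej|jj0]; last by rewrite jA.
    subst j0 => /= /eqP; rewrite addn_eq0 => /andP[_ ji].
    pose t := om (i + j).
    move: (c1 t) (c t); rewrite /= eqxx => ->.
    have : ((nat_of_ord j + nat_of_ord i) %% m != nat_of_ord i)%N.
      by apply: modneq => //; rewrite ltn_ord andbT; exact: (oksetP ok _ jA).
    rewrite addnC => /negbTE ->.
    by move/eqP; rewrite eqn_add2l.
  rewrite (bigD1 j0) //= big1 ?addr0; last first.
    by move=> j /andP[jA jj0]; rewrite o1 // o2 // !mulr0 subrr mulr0.
  rewrite o2 // mulr0 subr0 => _; left; exists j0; split.
    by rewrite (oksetP ok _ j0A) ltn_ord.
  rewrite /e1; case: (sgn_pm j0 A) => ->; case: v1 => ->.
  - by left; rewrite !mul1r mulr1.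
  - by right; rewrite mul1r mulrN1.
  - by right; rewrite mulN1r mulr1.
  - by left; rewrite mulN1r mulrN1 opprK.
have n1 : forall j : 'I_m, j \in A -> e1 j = 0.
  by move=> j jA; apply/eqP; apply/negP => /negP ne; move/negP: none1; apply; apply/exists_inP; exists j.
case: (boolP [exists j in A, e2 j != 0]) => [/exists_inP [j0 j0A e20] | none2]; last first.
  rewrite big1 ?eqxx // => j jA.
  have : e2 j = 0 by apply/eqP; apply/negP => /negP ne; move/negP: none2; apply; apply/exists_inP; exists j.
  by move=> ->; rewrite n1 // !mulr0 subrr mulr0.
have z0 : ((i + j0) %% m != 0)%N by apply: contra e20 => /eqP z; rewrite e2z.
have [v2 c2] := @ebq _ _ _ z0 e20.
have o2 : forall j, j \in A -> j != j0 -> e2 j = 0.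
  move=> j jA jj0; case: (eqVneq ((i + j) %% m) 0)%N => z; first exact: e2z.
  apply/eqP; apply/negP => /negP ne.
  have [_ c] := @ebq _ _ _ z ne.
  have nj : ((nat_of_ord i + nat_of_ord j) %% m != nat_of_ord j)%N.
    by apply: modneq => //; exact: ltn_ord.
  have nj' : (nat_of_ord j == (i + j) %% m)%N = false by rewrite eq_sym (negbTE nj).
  move: (c2 j) (c j); rewrite !inE eqxx /= nj' jA jj0 /= => ->.
  by case: (_ == _).
rewrite (bigD1 j0) //= big1 ?addr0; last first.
  by move=> j /andP[jA jj0]; rewrite o2 // n1 // !mulr0 subrr mulr0.
rewrite n1 // mulr0 sub0r => _; right; exists i, j0; split => //.
  by rewrite (oksetP ok _ j0A) ltn_ord.
rewrite /e2; case: (sgn_pm j0 A) => ->; case: v2 => ->.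
- by right; rewrite mulr1 mul1r.
- by left; rewrite mulrN1 opprK mul1r.
- by left; rewrite mulr1 mulN1r opprK.
- by right; rewrite mulrN1 opprK mulN1r.
Qed.

End Vec.

Theorem lemma3p2 (F : fieldType) (S : nat -> bool) (m : nat) (a : nat -> nat)
  (hS : is_numerical_semigroup S) (hm : is_multiplicity S m) (hm2 : (1 < m)%N)
  (ha : is_apery S m a) :
  (* (1) compatibility with the substitution convention *)
  (forall d : nat, (2 <= d)%N ->
     (forall B : {set 'I_m}, [forall j in B, (0 < val j)%N] -> #|B| = d.+1 ->
        \sum_(i in B) vscale F m (sgn F m i B) (dform F m a i (B :\ i)) = 0)
     /\
     (forall (i : 'I_m) (A : {set 'I_m}), (0 < val i)%N ->
        [forall j in A, (0 < val j)%N] -> #|A| = d -> below m (val i) A ->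
        dform F m a i A = dd F m a d (eb F m i A)))
  /\
  (* (2) nonzero matrix entries of partial_d (d > 1) are +- x_k or +- y^b_(k,l) *)
  (forall (d : nat) (p q : idx m), (1 < d)%N -> valid m d p -> valid m d.-1 q ->
     dd F m a d (ebasis F m p) q != 0 ->
     (exists k : nat, (0 < k < m)%N /\
        (dd F m a d (ebasis F m p) q = xv F m k \/ dd F m a d (ebasis F m p) q = - xv F m k))
     \/
     (exists k l : nat, [/\ (0 < k < m)%N, (0 < l < m)%N &
        (dd F m a d (ebasis F m p) q = yv F m ^+ bb m a k l
         \/ dd F m a d (ebasis F m p) q = - yv F m ^+ bb m a k l)]))
  /\
  (* (3) partial_(d-1) o partial_d = 0 for d >= 2 *)
  (forall v : vec F m, inF F m 2 v -> d1 F m a (dd F m a 2 v) = 0)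
  /\
  (forall (d : nat) (v : vec F m), (3 <= d)%N -> inF F m d v ->
     dd F m a d.-1 (dd F m a d v) = 0).
Proof.
split.
  move=> d d2; split.
    by move=> B okB cB; exact: (@claim1 F m a B okB).
  move=> i A ip okA cA bl.
  by rewrite (@ddeb F m a hm2 d i A okA cA).
split.
  move=> d p q d1 vp vq ne.
  exact: (@part2 F m a hm2 d p q d1 vp ne).
split.
  by move=> v _; exact: (@part3a F m a hm2 S hS hm ha v).
by move=> d v d3 _; exact: (@part3b F m a hm2 S hS hm ha d v d3).
Qed.
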